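(* Let $G$ be a finite simple graph with vertex set $[n]$ and let $\lambda>0$. Then $\mathrm{PRSforIS}_f(G,\lambda)$ terminates with probability $1$, for any choice function $f$. On termination, $\mathbf X$ is the indicator vector of an independent set $I$ of $G$, distributed according to the Gibbs (hard-core) distribution $\Pr(I)=\lambda^{|I|}/\sum_{J}\lambda^{|J|}$, where $J$ ranges over all independent sets of $G$, including $\emptyset$.
   Context: Variables $\mathbf X=(X_v:v\in[n])$ take values in $\{0,1\}$; $\mathbf X$ encodes the vertex set $\{v:X_v=1\}$. Under the product distribution, each $X_v$ is independently $1$ with probability $\lambda/(1+\lambda)$. For $S\subseteq[n]$, $\partial S=\{v\notin S:\ v\text{ is adjacent to some }u\in S\}$ and $\overline S=S\cup\partial S$. Let $\mathcal C$ be the family of sets $S\subseteq[n]$ with $|S|\ge2$ such that the induced subgraph $G[S]$ is connected. A set $S\in\mathcal C$ is a cluster (for the current $\mathbf X$) if $X_v=1$ for all $v\in S$ and $X_v=0$ for all $v\in\partial S$. $\mathbf X$ encodes an independent set iff there is no cluster. Algorithm $\mathrm{PRSforIS}_f(G,\lambda)$: fix a function $f$ assigning to each nonempty family $\mathcal N\subseteq\mathcal C$ an element $f(\mathcal N)\in\mathcal N$. Sample $\mathbf X$ from the product distribution. While $\mathbf X$ does not encode an independent set, let $\mathcal N$ be the set of current clusters, let $S=f(\mathcal N)$, and resample all $X_v$, $v\in\overline S$, independently as Bernoulli$(\lambda/(1+\lambda))$. *)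

(* Defs.v *)
From HB Require Import structures.
From mathcomp Require Import all_boot all_order all_algebra.
From mathcomp Require Import all_classical all_reals all_analysis.
Set Implicit Arguments. Unset Strict Implicit. Unset Printing Implicit Defensive.
Import Order.TTheory GRing.Theory Num.Theory.
Local Open Scope ring_scope.

Definition simple_graph (n : nat) (adj : rel 'I_n) : Prop :=
  (forall u, ~~ adj u u) /\ (forall u v, adj u v = adj v u).

Notation config n := {ffun 'I_n -> bool}.

Definition encoded n (x : config n) : {set 'I_n} := [set v | x v].

Definition is_indep n (adj : rel 'I_n) (x : config n) : bool :=
  [forall u, forall v, adj u v ==> ~~ (x u && x v)].

Definition bdry n (adj : rel 'I_n) (S : {set 'I_n}) : {set 'I_n} :=
  [set v | (v \notin S) && [exists u in S, adj u v]].
Definition clos n (adj : rel 'I_n) (S : {set 'I_n}) : {set 'I_n} :=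
  S :|: bdry adj S.

Definition induced_connected n (adj : rel 'I_n) (S : {set 'I_n}) : bool :=
  [forall u : 'I_n, forall v : 'I_n, (u \in S) && (v \in S) ==>
     connect [rel a b | [&& adj a b, a \in S & b \in S]] u v].

Definition Cfam n (adj : rel 'I_n) : {set {set 'I_n}} :=
  [set S : {set 'I_n} | (2 <= #|S|)%N && induced_connected adj S].

Definition is_cluster n (adj : rel 'I_n) (x : config n) (S : {set 'I_n}) : bool :=
  [&& S \in Cfam adj, [forall v in S, x v] & [forall v in bdry adj S, ~~ x v]].

Definition clusters n (adj : rel 'I_n) (x : config n) : {set {set 'I_n}} :=
  [set S : {set 'I_n} | is_cluster adj x S].

Section Chain.
Variable R : realType.

Definition prod_weight (lambda : R) n (T : {set 'I_n}) (y : config n) : R :=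
  \prod_(v in T) (if y v then lambda / (1 + lambda) else 1 - lambda / (1 + lambda)).

(* one step of PRSforIS_f: if X is independent the algorithm has stopped
   (modelled as an absorbing state); otherwise resample closure(f(clusters X)). *)
Definition prs_step (lambda : R) n (adj : rel 'I_n)
    (f : {set {set 'I_n}} -> {set 'I_n}) (x y : config n) : R :=
  if is_indep adj x then (if y == x then 1 else 0)
  else let T := clos adj (f (clusters adj x)) in
       (if [forall v in ~: T, y v == x v] then 1 else 0) * prod_weight lambda T y.

Fixpoint prs_law (lambda : R) n (adj : rel 'I_n)
    (f : {set {set 'I_n}} -> {set 'I_n}) (t : nat) (y : config n) : R :=
  match t with
  | 0 => prod_weight lambda [set: 'I_n] y
  | t'.+1 => \sum_(x : config n) prs_law lambda adj f t' x * prs_step lambda adj f x y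
  end.

Definition hc_Z (lambda : R) n (adj : rel 'I_n) : R :=
  \sum_(z : config n | is_indep adj z) lambda ^+ #|encoded z|.
End Chain.

(* Main.v *)
Require Import Defs.
From HB Require Import structures.
From mathcomp Require Import all_boot all_order all_algebra.
From mathcomp Require Import all_classical all_reals all_analysis.
From mathcomp Require Import ring lra.
Import Order.TTheory GRing.Theory Num.Theory.
Import numFieldNormedType.Exports.
Set Implicit Arguments. Unset Strict Implicit. Unset Printing Implicit Defensive.
Local Open Scope ring_scope.

Section Graph.
Variables (n : nat) (adj : rel 'I_n).
Hypothesis sg : simple_graph adj.

Lemma adj_sym u v : adj u v = adj v u.
Proof. by case: sg. Qed.
Lemma adj_irr u : ~~ adj u u.
Proof. by case: sg. Qed.

Definition eS (D : {set 'I_n}) := [rel a b | [&& adj a b, a \in D & b \in D]].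
Definition e1 (x : config n) := [rel a b | [&& adj a b, x a & x b]].

Lemma icP D a b : induced_connected adj D -> a \in D -> b \in D ->
  connect (eS D) a b.
Proof.
move=> /forallP/(_ a)/forallP/(_ b)/implyP H aD bD.
by apply: H; rewrite aD bD.
Qed.

Lemma sub_cluster (x : config n) C D c :
  [forall v in bdry adj C, ~~ x v] -> induced_connected adj D ->
  [forall v in D, x v] -> c \in D -> c \in C -> D \subset C.
Proof.
move=> /forallP bC icD /forallP xD cD cC; apply/fintype.subsetP => d dD.
have cl : fingraph.closed (eS D) C.
  move=> a b /=; case/and3P=> ab aD bD.
  have xa := implyP (xD a) aD; have xb := implyP (xD b) bD.
  case aC: (a \in C); case bC': (b \in C) => //.
  - have : b \in bdry adj C by rewrite inE bC' /=; apply/existsP; exists a; rewrite aC.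
    by move=> H; move: (implyP (bC b) H); rewrite xb.
  - have : a \in bdry adj C.
      by rewrite inE aC /=; apply/existsP; exists b; rewrite bC' adj_sym.
    by move=> H; move: (implyP (bC a) H); rewrite xa.
by rewrite -(closed_connect cl (icP icD cD dD)).
Qed.

Definition comp (x : config n) u := [set w | connect (e1 x) u w].

Lemma connect_last (T : finType) (e : rel T) u w :
  connect e u w -> u = w \/ exists z, e z w.
Proof.
case/connectP=> p; elim/last_ind: p => [|p z _] /=; first by move=> _ ->; left.
rewrite rcons_path last_rcons => /andP[_ H] ->; right; by exists (last u p).
Qed.

Lemma connect_first (T : finType) (e : rel T) u w :
  connect e u w -> u = w \/ exists z, e u z.
Proof.
case/connectP=> [[|z p]] /=; first by move=> _ ->; left.
by case/andP=> H _ _; right; exists z.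
Qed.

Lemma comp_in (x : config n) u : u \in comp x u.
Proof. by rewrite inE connect0. Qed.

Lemma comp_one (x : config n) (u w : 'I_n) : x u -> w \in comp x u -> x w.
Proof.
move=> xu; rewrite inE => /connect_last [<-//|[z]] /=.
by case/and3P.
Qed.

Lemma e1_sym (x : config n) : symmetric (e1 x).
Proof. by move=> a b /=; rewrite adj_sym; case: (x a); case: (x b); rewrite /= ?andbT ?andbF. Qed.

Lemma comp_bdry (x : config n) u : x u -> [forall v in bdry adj (comp x u), ~~ x v].
Proof.
move=> xu; apply/forallP => v; apply/implyP; rewrite inE => /andP[vC /existsP[w /andP[wC wv]]].
apply/negP => xv; move: vC; rewrite inE => /negP; apply.
apply: connect_trans (_ : connect (e1 x) w v).
  by move: wC; rewrite inE.
by apply: connect1 => /=; rewrite wv xv (comp_one xu wC).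
Qed.

Lemma comp_path (x : config n) u p a : x u -> a \in comp x u -> path (e1 x) a p ->
  connect (eS (comp x u)) a (last a p).
Proof.
move=> xu; elim: p a => [|z p IH] a aC /=; first by rewrite connect0.
case/andP=> az pz.
have zC : z \in comp x u.
  rewrite inE; apply: (connect_trans (y:=a)); last exact: connect1.
  by move: aC; rewrite inE.
apply: connect_trans (IH z zC pz); apply: connect1 => /=.
by move: az => /= /and3P[-> _ _]; rewrite aC zC.
Qed.

Lemma comp_ic (x : config n) u : x u -> induced_connected adj (comp x u).
Proof.
move=> xu; apply/forallP=> a; apply/forallP=> b; apply/implyP=> /andP[aC bC].
have cab : connect (e1 x) a b.
  apply: connect_trans (_ : connect (e1 x) u b); last by move: bC; rewrite inE.
  by rewrite (sym_connect_sym (e1_sym x)); move: aC; rewrite inE.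
by case/connectP: cab => p pp ->; apply: comp_path.
Qed.

Lemma sub_comp (x : config n) D u : induced_connected adj D ->
  [forall v in D, x v] -> u \in D -> D \subset comp x u.
Proof.
move=> icD /forallP xD uD; apply/fintype.subsetP => d dD; rewrite inE.
apply: connect_sub (icP icD uD dD) => a b /= /and3P[ab aD bD].
by apply: connect1 => /=; rewrite ab (implyP (xD a) aD) (implyP (xD b) bD).
Qed.

Lemma comp_cluster (x : config n) u v : adj u v -> x u -> x v ->
  is_cluster adj x (comp x u).
Proof.
move=> uv xu xv; apply/and3P; split.
- rewrite inE comp_ic // andbT; apply/card_gt1P; exists u, v; split.
  + exact: comp_in.
  + by rewrite inE; apply: connect1 => /=; rewrite uv xu xv.
  + by apply/eqP => E; move: uv; rewrite E (negbTE (adj_irr v)).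
- by apply/forallP => w; apply/implyP; apply: comp_one.
- exact: comp_bdry.
Qed.

Lemma indep_clusters (x : config n) : is_indep adj x = (clusters adj x == finset.set0).
Proof.
apply/idP/idP.
- move=> /forallP H; apply/eqP/setP => S; rewrite inE finset.in_set0; apply/negP.
  case/and3P; rewrite inE => /andP[/card_gt1P[a [b [aS bS ab]]] icS] /forallP xS _.
  case: (connect_first (icP icS aS bS)) => [E|[z /= /and3P[az _ zS]]].
    by rewrite E eqxx in ab.
  move/forallP: (H a) => /(_ z) /implyP /(_ az).
  by rewrite (implyP (xS a) aS) (implyP (xS z) zS).
- move=> /eqP E; apply/forallP => u; apply/forallP => v; apply/implyP => uv.
  apply/negP => /andP[xu xv].
  have : comp x u \in clusters adj x by rewrite inE (comp_cluster uv).
  by rewrite E finset.in_set0.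
Qed.


Definition plant (S : {set 'I_n}) (y : config n) : config n :=
  [ffun v => if v \in S then true else if v \in bdry adj S then false else y v].

Definition Fset (S : {set 'I_n}) (M : {set {set 'I_n}}) : {set {set 'I_n}} :=
  [set D in Cfam adj | [disjoint D & clos adj S] &&
     [exists C in M, (D \subset C) &&
        [forall v in bdry adj D, (v \in C) ==> (v \in clos adj S)]]].

Lemma bdryP (S : {set 'I_n}) v :
  reflect (v \notin S /\ exists2 u, u \in S & adj u v) (v \in bdry adj S).
Proof.
rewrite inE; apply: (iffP andP) => [[vS /existsP[u /andP[uS uv]]]|[vS [u uS uv]]].
  by split=> //; exists u.
by split=> //; apply/existsP; exists u; rewrite uS.
Qed.

Lemma closE (S : {set 'I_n}) v : (v \in clos adj S) = (v \in S) || (v \in bdry adj S).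
Proof. by rewrite /clos inE. Qed.

Lemma plant_cluster S y : S \in Cfam adj -> is_cluster adj (plant S y) S.
Proof.
move=> SC; apply/and3P; split=> //.
  by apply/forallP => v; apply/implyP => vS; rewrite ffunE vS.
apply/forallP => v; apply/implyP => vb; rewrite ffunE vb.
by case/bdryP: vb => /negbTE ->.
Qed.

Lemma cl_plant S y : S \in Cfam adj ->
  clusters adj (plant S y) = S |: Fset S (clusters adj y).
Proof.
move=> SC; apply/setP => D; rewrite !inE.
have [->|DS] /= := eqVneq D S; first by rewrite plant_cluster.
have icS : induced_connected adj S by move: SC; rewrite inE => /andP[].
set z := plant S y.
apply/idP/idP.
- case/and3P => DC /forallP zD /forallP zbD.
  have icD : induced_connected adj D by move: DC; rewrite inE => /andP[].
  have zD' v : v \in D -> z v by move=> vD; exact: (implyP (zD v) vD).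
  have DSd : [disjoint D & S].
    apply/pred0P => c /=; apply/negP => /andP[cD cS].
    have h1 : D \subset S.
      apply: (sub_cluster (x:=z)) cD cS => //; last by apply/forallP.
      apply/forallP => v; apply/implyP => vb; rewrite ffunE vb.
      by case/bdryP: vb => /negbTE ->.
    have h2 : S \subset D.
      apply: (sub_cluster (x:=z)) cS cD => //; first by apply/forallP.
      by apply/forallP => v; apply/implyP => vS; rewrite ffunE vS.
    by move: DS; rewrite finset.eqEsubset h1 h2.
  have DT : [disjoint D & clos adj S].
    apply/pred0P => c /=; apply/negP => /andP[cD]; rewrite closE => /orP[cS|cb].
      by move/pred0P: DSd => /(_ c); rewrite /= cD cS.
    by move: (zD' c cD); rewrite ffunE cb; case/bdryP: cb => /negbTE ->.
  have zy v : v \in D -> z v = y v.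
    move=> vD; move/pred0P: DT => /(_ v) /=; rewrite vD closE /= => /norP[vS vb].
    by rewrite ffunE (negbTE vS) (negbTE vb).
  have yD v : v \in D -> y v by move=> vD; rewrite -zy // zD'.
  have [d0 d0D] : exists d0, d0 \in D.
    move: DC; rewrite inE => /andP[/card_gt1P[a [_ [aD _ _]]] _]; by exists a.
  have DsC : D \subset comp y d0.
    by apply: sub_comp => //; apply/forallP => v; apply/implyP => /yD.
  apply/andP; split; first by move: DC; rewrite inE.
  apply/andP; split=> //.
  apply/existsP; exists (comp y d0); apply/and3P; split=> //.
  + rewrite inE; apply/and3P; split.
    * rewrite inE comp_ic ?yD // andbT.
      by apply: leq_trans (subset_leq_card DsC); move: DC; rewrite inE => /andP[].
    * by apply/forallP => v; apply/implyP; apply: comp_one; rewrite yD.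
    * by apply: comp_bdry; rewrite yD.
  + apply/forallP => v; apply/implyP => vb; apply/implyP => vC.
    apply/negPn/negP => vT.
    have yv : y v by apply: comp_one vC; rewrite yD.
    move: (implyP (zbD v) vb); rewrite ffunE.
    by move: vT; rewrite closE => /norP[/negbTE -> /negbTE ->]; rewrite yv.
- case/andP => DC /andP[DT /existsP[C /and3P[Ccl DsC Hb]]].
  move: Ccl; rewrite inE => /and3P[_ /forallP yC /forallP ybC].
  have nT v : v \in D -> v \notin clos adj S.
    by move=> vD; rewrite (disjointFr DT vD).
  rewrite /is_cluster; apply/and3P; split; first by rewrite inE.
  + apply/forallP => v; apply/implyP => vD.
    move: (nT v vD); rewrite closE => /norP[vS vb].
    rewrite ffunE (negbTE vS) (negbTE vb).
    exact: (implyP (yC v) (fintype.subsetP DsC v vD)).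
  + apply/forallP => v; apply/implyP => vbD.
    have vbD' := vbD; case/bdryP: vbD' => vnD [d dD dv].
    have dC : d \in C := fintype.subsetP DsC d dD.
    rewrite ffunE.
    case vS: (v \in S).
      exfalso; move: (nT d dD); rewrite closE => /norP[dS db].
      by move: db => /negP; apply; apply/bdryP; split=> //; exists v => //; rewrite adj_sym.
    case vb: (v \in bdry adj S) => //=.
    apply/negP => yv.
    case vC: (v \in C).
      by move: (implyP (forallP Hb v) vbD); rewrite vC closE vS vb.
    have : v \in bdry adj C by apply/bdryP; split; [rewrite vC| exists d].
    by move=> H; move: (implyP (ybC v) H); rewrite yv.
Qed.

End Graph.

Section Chain.
Variables (R : realType) (n : nat) (adj : rel 'I_n) (lambda : R)
  (f : {set {set 'I_n}} -> {set 'I_n}).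
Hypothesis sg : simple_graph adj.
Hypothesis lam0 : 0 < lambda.
Hypothesis hf : forall N : {set {set 'I_n}}, N \subset Cfam adj -> N != finset.set0 -> f N \in N.

Let p := lambda / (1 + lambda).
Definition qv (b : bool) : R := if b then p else 1 - p.
Let pw (T : {set 'I_n}) (y : config n) := prod_weight lambda T y.
Let step := prs_step lambda adj f.
Let law := prs_law lambda adj f.

Lemma pwE T y : pw T y = \prod_(v in T) qv (y v).
Proof. by []. Qed.

Lemma p_gt0 : 0 < p.
Proof. by rewrite /p divr_gt0 // addr_gt0. Qed.
Lemma p_lt1 : p < 1.
Proof. have h : 0 < 1 + lambda by rewrite addr_gt0. by rewrite /p ltr_pdivrMr // mul1r ltrDr. Qed.
Lemma qv_gt0 b : 0 < qv b.
Proof. by case: b; rewrite /qv ?p_gt0 ?subr_gt0 ?p_lt1. Qed.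
Lemma qv_ge0 b : 0 <= qv b.
Proof. exact/ltW/qv_gt0. Qed.
Lemma pw_ge0 T y : 0 <= pw T y.
Proof. by rewrite pwE; apply: prodr_ge0 => v _; apply: qv_ge0. Qed.
Lemma pw_gt0 T y : 0 < pw T y.
Proof. by rewrite pwE; apply: prodr_gt0 => v _; apply: qv_gt0. Qed.

Lemma prod_ind (P : pred 'I_n) (b : pred 'I_n) :
  \prod_(v | P v) (if b v then 1 else 0 : R) = if [forall v, P v ==> b v] then 1 else 0.
Proof.
case: ifP => [/forallP H|/negbT/forallPn[v]]; first by rewrite big1 // => v /(implyP (H v)) ->.
rewrite negb_imply => /andP[Pv bv]; rewrite (bigD1 v) //= (negbTE bv) mul0r //.
Qed.

Lemma sum_pw (T : {set 'I_n}) (x : config n) :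
  \sum_(y : config n) (if [forall v in ~: T, y v == x v] then 1 else 0) * pw T y = 1.
Proof.
pose F (v : 'I_n) (b : bool) : R := if v \in T then qv b else if b == x v then 1 else 0.
have H1 : \prod_(v : 'I_n) \sum_(b : bool) F v b = 1.
  rewrite big1 // => v _; rewrite big_bool /F; case: (v \in T).
    by rewrite /= /qv addrCA subrr addr0.
  by rewrite /=; case: (x v); rewrite /= ?addr0 ?add0r.
rewrite -[RHS]H1 bigA_distr_bigA; apply: eq_bigr => y _.
rewrite (bigID (mem T)) /= mulrC; congr (_ * _).
  by rewrite pwE; apply: eq_bigr => v vT; rewrite /F vT.
rewrite (eq_bigr (fun v => if y v == x v then 1 else 0)); last first.
  by move=> v vT; rewrite /F (negbTE vT).
rewrite prod_ind; congr (if _ then _ else _).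
by apply: eq_forallb => v; rewrite inE.
Qed.

Lemma step_ge0 x y : 0 <= step x y.
Proof.
rewrite /step /prs_step; case: ifP => _; first by case: ifP.
by apply: mulr_ge0; [case: ifP | apply: pw_ge0].
Qed.

Lemma sum_step x : \sum_y step x y = 1.
Proof.
rewrite /step /prs_step; case: (is_indep adj x) => /=; last exact: sum_pw.
by rewrite (bigD1 x) //= eqxx big1 ?addr0 // => y /negbTE ->.
Qed.

Lemma law_ge0 t y : 0 <= law t y.
Proof.
elim: t y => [|t IH] y /=; first exact: pw_ge0.
by apply: sumr_ge0 => x _; apply: mulr_ge0; [apply: IH | apply: step_ge0].
Qed.

Fixpoint Pk (k : nat) (x y : config n) : R :=
  match k with
  | 0 => if y == x then 1 else 0
  | k'.+1 => \sum_z step x z * Pk k' z y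
  end.

Lemma Pk_ge0 k x y : 0 <= Pk k x y.
Proof.
elim: k x => [|k IH] x /=; first by case: ifP.
by apply: sumr_ge0 => z _; apply: mulr_ge0; [apply: step_ge0 | apply: IH].
Qed.

Lemma Pk_sum k x : \sum_y Pk k x y = 1.
Proof.
elim: k x => [|k IH] x /=.
  by rewrite (bigD1 x) //= eqxx big1 ?addr0 // => y /negbTE ->.
rewrite exchange_big /= -(sum_step x); apply: eq_bigr => z _.
by rewrite -mulr_sumr IH mulr1.
Qed.

Lemma Pk_indep k x y : is_indep adj x -> Pk k x y = if y == x then 1 else 0.
Proof.
move=> ix; elim: k => [|k IH] //=.
rewrite (bigD1 x) //= big1 ?addr0.
  by rewrite IH /step /prs_step ix eqxx mul1r.
by move=> z zx; rewrite /step /prs_step ix (negbTE zx) mul0r.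
Qed.

Lemma law_add t k y : law (t + k) y = \sum_x law t x * Pk k x y.
Proof.
elim: k t => [|k IH] t /=.
  rewrite addn0 (bigD1 y) //= eqxx mulr1 big1 ?addr0 //.
  by move=> x xy; rewrite eq_sym (negbTE xy) mulr0.
rewrite addnS -addSn IH /=.
rewrite (eq_bigr (fun x => \sum_w law t w * step w x * Pk k x y)); last first.
  by move=> x _; rewrite /law /= mulr_suml.
rewrite exchange_big /=; apply: eq_bigr => w _.
by rewrite mulr_sumr; apply: eq_bigr => x _; rewrite mulrA.
Qed.

Lemma law_sum t : \sum_y law t y = 1.
Proof.
rewrite -[t]add0n.
rewrite (eq_bigr (fun y => \sum_x law 0 x * Pk t x y)); last by move=> y _; rewrite law_add.
rewrite exchange_big /=.
rewrite (eq_bigr (fun x => law 0 x)); last by move=> x _; rewrite -mulr_sumr Pk_sum mulr1.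
rewrite -(sum_pw finset.setT (finfun (fun _ => true))); apply: eq_bigr => y _ /=.
suff -> : [forall v in ~: finset.setT, y v == (finfun (fun _ : 'I_n => true)) v] by rewrite mul1r.
by apply/forallP => v; rewrite !inE.
Qed.

Lemma cl_sub (x : config n) : clusters adj x \subset Cfam adj.
Proof. by apply/fintype.subsetP => S; rewrite inE => /and3P[]. Qed.

Lemma nonind_S (x : config n) : ~~ is_indep adj x -> f (clusters adj x) \in clusters adj x.
Proof. by rewrite (indep_clusters sg) => H; apply: hf => //; apply: cl_sub. Qed.

Definition g k x := \sum_(y | is_indep adj y) Pk k x y.

Lemma g_indep k x : is_indep adj x -> g k x = 1.
Proof.
move=> ix; rewrite /g (bigD1 x) //= Pk_indep // eqxx big1 ?addr0 //.
by move=> y /andP[_ yx]; rewrite Pk_indep // (negbTE yx).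
Qed.

Lemma g_ge0 k x : 0 <= g k x.
Proof. by apply: sumr_ge0 => y _; apply: Pk_ge0. Qed.

Lemma g_le1 k x : g k x <= 1.
Proof.
rewrite -(Pk_sum k x) (bigID (fun y => is_indep adj y)) /= lerDl.
by apply: sumr_ge0 => y _; apply: Pk_ge0.
Qed.

Let delta := (1 - p) ^+ n.

Lemma q0_ge0 : 0 <= 1 - p.
Proof. by rewrite subr_ge0 ltW // p_lt1. Qed.
Lemma q0_le1 : 1 - p <= 1.
Proof. by rewrite lerBlDr lerDl ltW // p_gt0. Qed.
Lemma delta_ge0 : 0 <= delta.
Proof. by rewrite exprn_ge0 // q0_ge0. Qed.
Lemma delta_le1 : delta <= 1.
Proof. by rewrite exprn_ile1 // ?q0_ge0 ?q0_le1. Qed.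
Lemma delta_gt0 : 0 < delta.
Proof. by rewrite exprn_gt0 // subr_gt0 p_lt1. Qed.

Lemma g_bound k x : (#|encoded x| <= k)%N -> delta ^+ k <= g k x.
Proof.
elim: k x => [|k IH] x.
  rewrite leqn0 => /eqP /cards0_eq E.
  rewrite g_indep ?expr0 //; apply/forallP => u; apply/forallP => v; apply/implyP => _.
  have : u \notin encoded x by rewrite E finset.in_set0.
  by rewrite inE => /negbTE ->.
move=> hx.
case ix: (is_indep adj x).
  by rewrite g_indep // exprn_ile1 ?delta_ge0 ?delta_le1.
have Scl := nonind_S (negbT ix).
set S := f (clusters adj x) in Scl.
set T := clos adj S.
pose x0 : config n := [ffun v => x v && (v \notin T)].
have gE : g k.+1 x = \sum_z step x z * g k z.
  rewrite /g /=.
  rewrite (eq_bigr (fun y => \sum_z step x z * Pk k z y)) //.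
  rewrite exchange_big /=; apply: eq_bigr => z _; by rewrite mulr_sumr.
have st : step x x0 = (1 - p) ^+ #|T|.
  rewrite /step /prs_step ix -/S -/T.
  have -> : [forall v in ~: T, x0 v == x v].
    by apply/forallP => v; apply/implyP; rewrite inE => vT; rewrite ffunE vT andbT.
  rewrite mul1r /prod_weight -prodr_const; apply: eq_bigr => v vT.
  by rewrite ffunE vT andbF.
have stb : delta <= step x x0.
  rewrite st /delta; apply: ler_wiXn2l; rewrite ?q0_ge0 ?q0_le1 //.
  by rewrite -[X in (_ <= X)%N]card_ord max_card.
have cx0 : (#|encoded x0| <= k)%N.
  rewrite -ltnS; apply: leq_trans hx; apply: proper_card; apply/properP; split.
    by apply/fintype.subsetP => v; rewrite !inE ffunE => /andP[].
  move: Scl; rewrite inE => /and3P[/[dup] SC]; rewrite inE => /andP[/card_gt1P[s [_ [sS _ _]]] _].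
  move=> /forallP xS _; exists s; first by rewrite inE (implyP (xS s) sS).
  by rewrite inE ffunE closE sS /= andbF.
rewrite gE (bigD1 x0) //= exprS.
apply: ler_wpDr; first by apply: sumr_ge0 => z _; apply: mulr_ge0; [apply: step_ge0|apply: g_ge0].
apply: ler_pM => //; [exact: delta_ge0 | exact: exprn_ge0 delta_ge0 | exact: IH].
Qed.


Definition wS (S : {set 'I_n}) := \prod_(v in clos adj S) qv (v \in S).

Lemma pw_plant S y : pw (clos adj S) (plant adj S y) = wS S.
Proof.
rewrite pwE; apply: eq_bigr => v; rewrite closE ffunE => /orP[->//|vb].
by rewrite vb; case/bdryP: vb => /negbTE ->.
Qed.

Lemma pw_split (T : {set 'I_n}) y : pw finset.setT y = pw T y * pw (~: T) y.
Proof. by rewrite !pwE (big_setID T) /= finset.setTI finset.setTD. Qed.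

Fixpoint phi (t : nat) (M : {set {set 'I_n}}) : R :=
  match t with
  | 0 => 1
  | t'.+1 => (if M == finset.set0 then phi t' finset.set0 else 0) +
      \sum_(N : {set {set 'I_n}} | (N \subset Cfam adj) && (N != finset.set0))
         phi t' N * wS (f N) * (if f N |: Fset adj (f N) M == N then 1 else 0)
  end.

Lemma inner t y (N : {set {set 'I_n}}) :
  (N \subset Cfam adj) && (N != finset.set0) ->
  \sum_(x | ~~ is_indep adj x && (clusters adj x == N))
     pw finset.setT x * phi t (clusters adj x) * step x y =
  pw finset.setT y *
     (phi t N * wS (f N) * (if f N |: Fset adj (f N) (clusters adj y) == N then 1 else 0)).
Proof.
case/andP => NC N0.
set S := f N; have SN : S \in N by apply: hf.
have SC : S \in Cfam adj := fintype.subsetP NC S SN.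
set T := clos adj S; set z := plant adj S y.
rewrite big_mkcond (bigD1 z) //= big1 ?addr0; last first.
  move=> x xz; case: ifP => // /andP[ix /eqP clx].
  rewrite /step /prs_step (negbTE ix) clx -/S -/T.
  case: ifP => [/forallP fa|]; last by rewrite !mul0r mulr0.
  exfalso; move/eqP: xz; apply; apply/ffunP => v; rewrite ffunE.
  have Scl : S \in clusters adj x by rewrite clx.
  move: Scl; rewrite inE => /and3P[_ /forallP xS /forallP xb].
  case vS: (v \in S); first exact: (implyP (xS v) vS).
  case vb: (v \in bdry adj S); first exact/negbTE/(implyP (xb v) vb).
  by apply/esym/eqP; apply: (implyP (fa v)); rewrite inE closE vS vb.
have clz : clusters adj z = S |: Fset adj S (clusters adj y) by apply: cl_plant.
rewrite clz; case: eqP => [E|_]; last by rewrite andbF !mulr0.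
have iz : ~~ is_indep adj z by rewrite (indep_clusters sg) clz E.
rewrite iz /= E /step /prs_step (negbTE iz) clz E -/S -/T.
have -> : [forall v in ~: T, y v == z v].
  apply/forallP => v; apply/implyP; rewrite inE closE => /norP[vS vb].
  by rewrite ffunE (negbTE vS) (negbTE vb).
rewrite mul1r mulr1 (pw_split T z) (pw_split T y) -/z.
have -> : pw (~: T) z = pw (~: T) y.
  rewrite !pwE; apply: eq_bigr => v; rewrite inE closE => /norP[vS vb].
  by rewrite ffunE (negbTE vS) (negbTE vb).
rewrite /z pw_plant -/S.
rewrite /pw /=; ring.
Qed.

Lemma law_phi t x : law t x = pw finset.setT x * phi t (clusters adj x).
Proof.
elim: t x => [|t IH] y; first by rewrite mulr1.
rewrite /law /= -/law.
rewrite (eq_bigr (fun x => pw finset.setT x * phi t (clusters adj x) * step x y)); last first.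
  by move=> x _; rewrite IH.
rewrite (bigID (fun x => is_indep adj x)) /= mulrDr; congr (_ + _).
  case iy: (is_indep adj y).
    rewrite (bigD1 y) //= big1 ?addr0.
      rewrite /step /prs_step iy eqxx mulr1.
      by move: iy; rewrite (indep_clusters sg) => /eqP ->; rewrite eqxx.
    by move=> x /andP[ix xy]; rewrite /step /prs_step ix eq_sym (negbTE xy) mulr0.
  have -> : (clusters adj y == finset.set0) = false by rewrite -(indep_clusters sg).
  rewrite mulr0 big1 // => x ix; rewrite /step /prs_step ix.
  by case: eqP => [E|]; [move: iy; rewrite E ix | rewrite mulr0].
rewrite (partition_big (fun x => clusters adj x)
   (fun N => (N \subset Cfam adj) && (N != finset.set0))) /=; last first.
  by move=> x ix; rewrite cl_sub -(indep_clusters sg).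
rewrite mulr_sumr; apply: eq_bigr => N QN; exact: inner.
Qed.
Let rho := 1 - delta ^+ n.

Definition a t := \sum_(x | ~~ is_indep adj x) law t x.

Lemma a_add t k : a (t + k) = \sum_(x | ~~ is_indep adj x) law t x * (1 - g k x).
Proof.
rewrite /a (eq_bigr (fun y => \sum_x law t x * Pk k x y)); last first.
  by move=> y _; exact: law_add.
rewrite exchange_big /=.
rewrite (bigID (fun x => is_indep adj x)) /= big1 ?add0r; last first.
  move=> x ix; rewrite -mulr_sumr.
  rewrite big1 ?mulr0 // => y ny; rewrite Pk_indep //.
  by case: eqP ny => // ->; rewrite ix.
apply: eq_bigr => x _; rewrite -mulr_sumr; congr (_ * _).
have E := Pk_sum k x; rewrite (bigID (fun y => is_indep adj y)) /= in E.
by rewrite -E [X in X - _]addrC addrK.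
Qed.

Lemma a_ge0 t : 0 <= a t.
Proof. by apply: sumr_ge0 => x _; apply: law_ge0. Qed.

Lemma a_le1 t : a t <= 1.
Proof.
rewrite -(law_sum t) [X in _ <= X](bigID (fun x => ~~ is_indep adj x)) /= lerDl.
by apply: sumr_ge0 => x _; apply: law_ge0.
Qed.

Lemma a_step t k : a (t + k) <= a t.
Proof.
rewrite a_add; apply: ler_sum => x _; rewrite -[X in _ <= X]mulr1.
apply: ler_wpM2l; first exact: law_ge0.
by rewrite lerBlDr lerDl g_ge0.
Qed.

Lemma a_stepn t : a (t + n) <= rho * a t.
Proof.
rewrite a_add /a mulr_sumr; apply: ler_sum => x _; rewrite mulrC.
apply: ler_wpM2r; first exact: law_ge0.
rewrite /rho lerB //; apply: g_bound => //.
by rewrite -[X in (_ <= X)%N](card_ord n) max_card.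
Qed.

Lemma a_mono s t : (s <= t)%N -> a t <= a s.
Proof. by move=> st; rewrite -(subnKC st) a_step. Qed.

Lemma rho_ge0 : 0 <= rho.
Proof. by rewrite /rho subr_ge0 exprn_ile1 // ?delta_ge0 ?delta_le1. Qed.
Lemma rho_lt1 : rho < 1.
Proof. by rewrite /rho ltrBlDr ltrDl exprn_gt0 // delta_gt0. Qed.

Lemma a_geom k : a (k * n) <= rho ^+ k.
Proof.
elim: k => [|k IH]; first by rewrite mul0n expr0 a_le1.
rewrite mulSnr exprS; apply: le_trans (a_stepn _) _.
by apply: ler_wpM2l => //; apply: rho_ge0.
Qed.

Local Open Scope classical_set_scope.
Lemma a_cvg : (a t @[t --> \oo] --> 0)%R.
Proof.
have rl : `|rho| < 1 by rewrite ger0_norm ?rho_lt1 ?rho_ge0.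
apply/cvgrPdist_lt => e e0.
have := cvg_expr rl; move/cvgrPdist_lt/(_ e e0) => [K _ HK].
exists (K * n)%N => // t /= Kt.
rewrite sub0r normrN ger0_norm ?a_ge0 //.
apply: le_lt_trans (a_mono Kt) _; apply: le_lt_trans (a_geom K) _.
by move: (HK K (leqnn K)); rewrite sub0r normrN ger0_norm // exprn_ge0 // rho_ge0.
Qed.



Local Open Scope classical_set_scope.
Lemma final_main :
  ((fun t => \sum_(x : config n | ~~ is_indep adj x) prs_law lambda adj f t x)
     @ \oo --> (0 : R))
  /\
  (forall I : config n, is_indep adj I ->
     (fun t => prs_law lambda adj f t I) @ \oo
       --> lambda ^+ #|encoded I| / hc_Z lambda adj).
Proof.
split; first exact: a_cvg.
move=> I iI.
set c : R := ((1 + lambda)^-1) ^+ n.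
have l1 : 1 + lambda != 0 by rewrite gt_eqF // addr_gt0.
have c0 : c != 0 by rewrite expf_neq0 // invr_eq0.
have pwE' J : pw finset.setT J = lambda ^+ #|encoded J| * c.
  rewrite pwE (eq_bigr (fun v => (if J v then lambda else 1) * (1 + lambda)^-1)); last first.
    move=> v _; rewrite /qv; case: (J v); first by [].
    by rewrite /p; field.
  rewrite big_split /= [X in _ * X]prodr_const cardsT card_ord -big_mkcondr /=.
  by rewrite -prodr_const; congr (_ * _); apply: eq_bigl => v; rewrite !inE.
set Pi := \sum_(J | is_indep adj J) pw finset.setT J.
have PiE : Pi = hc_Z lambda adj * c.
  by rewrite /hc_Z mulr_suml; apply: eq_bigr => J _; rewrite pwE'.
have Pi_gt0 : 0 < Pi.
  pose J0 : config n := [ffun => false].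
  have iJ0 : is_indep adj J0.
    by apply/forallP => u; apply/forallP => v; rewrite !ffunE implybT.
  rewrite /Pi (bigD1 J0) //=; apply: (lt_le_trans (pw_gt0 finset.setT J0)).
  by rewrite lerDl; apply: sumr_ge0 => J _; apply: pw_ge0.
have Z0 : hc_Z lambda adj != 0.
  by apply/eqP => Z0; move: Pi_gt0; rewrite PiE Z0 mul0r ltxx.
have clI : clusters adj I = finset.set0 by apply/eqP; rewrite -(indep_clusters sg).
have bE t : phi t finset.set0 * Pi = 1 - a t.
  rewrite /Pi mulr_sumr.
  have := law_sum t; rewrite (bigID (fun x => is_indep adj x)) /= => E.
  rewrite -E /a addrK; apply: eq_bigr => J iJ.
  rewrite law_phi mulrC; congr (_ * _); congr (phi t _).
  by apply/esym/eqP; rewrite -(indep_clusters sg).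
have key t : prs_law lambda adj f t I = (lambda ^+ #|encoded I| / hc_Z lambda adj) * (1 - a t).
  have -> : prs_law lambda adj f t I = pw finset.setT I * phi t finset.set0.
    by rewrite -clI -law_phi.
  have -> : phi t finset.set0 = (1 - a t) / Pi.
    by rewrite -bE mulrK // unitfE gt_eqF.
  rewrite pwE' PiE; field; by rewrite c0 Z0.
rewrite (_ : (fun t => prs_law lambda adj f t I) =
   (fun t => (lambda ^+ #|encoded I| / hc_Z lambda adj) * (1 - a t))); last first.
  by apply: funext => t; rewrite key.
set C := lambda ^+ #|encoded I| / hc_Z lambda adj.
have H : (fun t => C * (1 - a t)) @ \oo --> C * (1 - 0).
  apply: cvgM; first exact: cvg_cst.
  by apply: cvgB; [exact: cvg_cst | exact: a_cvg].
by rewrite subr0 mulr1 in H.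
Qed.

End Chain.

Local Open Scope classical_set_scope.
Local Open Scope ring_scope.

Theorem lemma6 (R : realType) (n : nat) (adj : rel 'I_n) (lambda : R)
  (f : {set {set 'I_n}} -> {set 'I_n}) :
  simple_graph adj -> 0 < lambda ->
  (forall N : {set {set 'I_n}}, N \subset Cfam adj -> N != finset.set0 -> f N \in N) ->
  (* termination with probability 1 *)
  ((fun t => \sum_(x : config n | ~~ is_indep adj x) prs_law lambda adj f t x)
     @ \oo --> (0 : R))
  /\
  (* output distribution is the hard-core Gibbs distribution *)
  (forall I : config n, is_indep adj I ->
     (fun t => prs_law lambda adj f t I) @ \oo
       --> lambda ^+ #|encoded I| / hc_Z lambda adj).
Proof.
move=> sg l0 hf; exact: (final_main sg l0 hf).
Qed.
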